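(* Let $p$ be a stochastic choice function on $X$, $M\in\mathcal N$ and $i,j\in M$ distinct. If $p(\cdot,M)$ is not bounded in a cycle over the pair $(i,j)$, then every MSC $\langle Q,\nu\rangle$ rationalizing $p$ satisfies $q_{ij}(M)=0$.
   Context: $X$ is a finite set of alternatives; a menu is a nonempty subset of $X$, and $\mathcal N$ denotes the set of all menus. A stochastic choice function is a map $p:X\times\mathcal N\to[0,1]$ with $\sum_{i\in M}p(i,M)=1$ and $p(i,M)=0$ for $i\notin M$; $p(\cdot,M)$ denotes the row vector $(p(i,M))_{i\in M}$. For $M\in\mathcal N$ and $i,j\in M$ let $\delta_{ij}(M)=p(i,M)\,p(j,\{i,j\})-p(i,\{i,j\})\,p(j,M)$. An MSC (Markov stochastic choice model) $\langle Q,\nu\rangle$ consists of, for every menu $M$, a matrix $Q(M)=(q_{ij}(M))_{i,j\in M}$ with nonnegative entries and a probability distribution $\nu_M$ on $M$, such that for all $M\in\mathcal N$ and distinct $i,j\in M$: (A1) $q_{ii}(M)=1-\sum_{k\neq i}q_{ik}(M)>0$; (A2) if $q_{ij}(\{i,j\})=0$ then $q_{ji}(\{i,j\})>0$; (A3) $q_{ij}(\{i,j\})\,q_{ji}(M)=q_{ji}(\{i,j\})\,q_{ij}(M)$. For a right stochastic matrix $Q$ on $M$ and a distribution $\nu$ on $M$ define $\rho(\nu,Q)=\lim_{\alpha\to0^+}\sum_{t\ge0}\alpha(1-\alpha)^t\nu Q^t$ (the limit exists and satisfies $\rho(\nu,Q)(I-Q)=0$). $p$ is rationalized by the MSC $\langle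 Q,\nu\rangle$ if $p(\cdot,M)=\rho(\nu_M,Q(M))$ for every $M\in\mathcal N$. A cycle on a set $M'=\{i_1,\dots,i_n\}$ (distinct elements in some order) is the set of ordered pairs $\{(i_1,i_2),\dots,(i_{n-1},i_n),(i_n,i_1)\}$. $p(\cdot,M)$ is bounded in a cycle over the pair $(i,j)$ if either $\delta_{ij}(M)=0$, or there exist $M'\subseteq M$ and a cycle on $M'$ containing $(i,j)$ such that all $\delta_{kl}(M)$, $(k,l)$ in the cycle, are strictly positive, or all are strictly negative. *)

(* Defs.v *)
From HB Require Import structures.
From mathcomp Require Import all_boot all_order all_algebra.
From mathcomp Require Import all_classical all_reals all_analysis.
Set Implicit Arguments. Unset Strict Implicit. Unset Printing Implicit Defensive.
Import Order.TTheory GRing.Theory Num.Theory.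
Import numFieldNormedType.Exports.
Local Open Scope classical_set_scope.
Local Open Scope ring_scope.

Section Defs.
Variables (R : realType) (X : finType).

Definition stoch_choice (p : X -> {set X} -> R) : Prop :=
  forall M : {set X}, M != finset.set0 ->
    (forall i, 0 <= p i M <= 1) /\
    (\sum_(i in M) p i M = 1) /\
    (forall i, i \notin M -> p i M = 0).

Definition delta (p : X -> {set X} -> R) (M : {set X}) (i j : X) : R :=
  p i M * p j (i |: [set j]) - p i (i |: [set j]) * p j M.

(* The cycle on the distinct elements s = [:: i1; ...; in]:
   pairs (i1,i2), ..., (i_{n-1},i_n), (i_n,i1). *)
Definition cycle_pairs (s : seq X) : seq (X * X) := zip s (rot 1 s).

Definition bounded_in_cycle (p : X -> {set X} -> R) (M : {set X}) (i j : X) : Prop :=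
  delta p M i j = 0 \/
  exists s : seq X,
    [/\ uniq s, {subset s <= M}, (i, j) \in cycle_pairs s &
      (forall kl, kl \in cycle_pairs s -> 0 < delta p M kl.1 kl.2) \/
      (forall kl, kl \in cycle_pairs s -> delta p M kl.1 kl.2 < 0)].

(* An MSC <Q, nu>: Q M is the matrix (q_ij(M))_{i,j in M}, nu M the initial
   distribution on M (entries outside M are irrelevant). *)
Definition MSC (Q : {set X} -> X -> X -> R) (nu : {set X} -> X -> R) : Prop :=
  forall M : {set X}, M != finset.set0 ->
    (forall i j, i \in M -> j \in M -> 0 <= Q M i j) /\
    (forall i, i \in M -> 0 <= nu M i) /\
    (\sum_(i in M) nu M i = 1) /\
    (forall i, i \in M ->
       Q M i i = 1 - \sum_(k in M | k != i) Q M i k /\ 0 < Q M i i) /\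
    (forall i j, i \in M -> j \in M -> i != j ->
       (Q (i |: [set j]) i j = 0 -> 0 < Q (i |: [set j]) j i) /\
       Q (i |: [set j]) i j * Q M j i = Q (i |: [set j]) j i * Q M i j).

Definition vmul (M : {set X}) (v : X -> R) (A : X -> X -> R) : X -> R :=
  fun j => \sum_(i in M) v i * A i j.

Definition vpow (M : {set X}) (v : X -> R) (A : X -> X -> R) (t : nat) : X -> R :=
  iter t (fun w => vmul M w A) v.

Definition abel_sum (M : {set X}) (v : X -> R) (A : X -> X -> R) (j : X) (a : R) : R :=
  limn (series (fun t : nat => a * (1 - a) ^+ t * vpow M v A t j)).

(* p is rationalized by <Q, nu>: p(., M) = rho(nu_M, Q(M)) for every menu M,
   rho being the limit as a -> 0+ of the Abel sums. *)
Definition rationalizes (p : X -> {set X} -> R)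
    (Q : {set X} -> X -> X -> R) (nu : {set X} -> X -> R) : Prop :=
  forall M : {set X}, M != finset.set0 -> forall j, j \in M ->
    (abel_sum M (nu M) (Q M) j @ at_right 0 --> p j M).

End Defs.

(* Main.v *)
Require Import Defs.
From HB Require Import structures.
From mathcomp Require Import all_boot all_order all_algebra.
From mathcomp Require Import all_classical all_reals all_analysis.
From mathcomp Require Import ring lra.
Import Order.TTheory GRing.Theory Num.Theory.
Import numFieldNormedType.Exports.
Local Open Scope ring_scope.

Section Ana.
Local Open Scope classical_set_scope.
Variables (R : realType) (X : finType).

Lemma cvg_bigsum {T : Type} (F : set_system T) {FF : Filter F}
   (r : seq X) (P : pred X) (f : X -> T -> R) (l : X -> R) :
  (forall k, P k -> f k x @[x --> F] --> l k) ->
  (\sum_(k <- r | P k) f k x) @[x --> F] --> \sum_(k <- r | P k) l k.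
Proof.
move=> H; elim: r => [|a r IH].
  have -> : (fun x => \sum_(k <- [::] | P k) f k x) = fun=> 0.
    by apply/funext => x; rewrite big_nil.
  rewrite big_nil; exact: cvg_cst.
have -> : (fun x => \sum_(k <- a :: r | P k) f k x) =
   fun x => (if P a then f a x else 0) + \sum_(k <- r | P k) f k x.
  by apply/funext => x; rewrite big_cons; case: (P a) => //; rewrite add0r.
rewrite big_cons; case: ifP => Pa.
  exact: cvgD (H _ Pa) IH.
rewrite -[X in _ --> X]add0r; apply: cvgD => //; exact: cvg_cst.
Qed.

Variables (M : {set X}) (v : X -> R) (A : X -> X -> R).
Hypothesis A0 : forall k l, k \in M -> l \in M -> 0 <= A k l.
Hypothesis A1 : forall k, k \in M -> \sum_(l in M) A k l = 1.
Hypothesis v0 : forall k, k \in M -> 0 <= v k.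
Hypothesis v1 : \sum_(k in M) v k = 1.

Lemma vpow_prop t : (forall k, k \in M -> 0 <= vpow M v A t k) /\
   \sum_(k in M) vpow M v A t k = 1.
Proof.
elim: t => [|t [IH1 IH2]] //=.
split.
  move=> k kM; rewrite /vmul; apply: sumr_ge0 => l lM.
  by apply: mulr_ge0; [exact: IH1 | exact: A0].
rewrite /vmul exchange_big /= -[RHS]IH2; apply: eq_bigr => k kM.
by rewrite -mulr_sumr A1 // mulr1.
Qed.

Lemma vpow_le1 t k : k \in M -> vpow M v A t k <= 1.
Proof.
move=> kM; have [H1 H2] := vpow_prop t.
rewrite -H2 (bigD1 k) //= lerDl; apply: sumr_ge0 => l /andP[lM _]; exact: H1.
Qed.

Section Fixa.
Variable a : R.
Hypothesis a0 : 0 < a.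
Hypothesis a1 : a < 1.

Definition uu k t := a * (1 - a) ^+ t * vpow M v A t k.

Lemma uu_cvg k : k \in M -> cvgn (series (uu k)).
Proof.
move=> kM; apply: nondecreasing_is_cvgn.
  rewrite seriesEnat /=; apply: nondecreasing_series => n _ _.
  rewrite /uu; apply: mulr_ge0; last by case: (vpow_prop n) => H _; exact: H.
  by apply: mulr_ge0; [exact: ltW | apply: exprn_ge0; rewrite subr_ge0 ltW].
exists 1 => _ [n _ <-].
apply: (@le_trans _ _ (series (geometric a (1 - a)) n)).
  rewrite !seriesEnat /=; apply: ler_sum => t _; rewrite /uu /geometric /=.
  rewrite -[leRHS]mulr1; apply: ler_wpM2l; last exact: vpow_le1.
  by apply: mulr_ge0; [exact: ltW | apply: exprn_ge0; rewrite subr_ge0 ltW].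
rewrite geometric_seriesE; last first.
  apply/eqP => h; have : a = 0 by have := congr1 (fun z => 1 - z) h; rewrite /= subrr; have -> : 1 - (1 - a) = a by ring.
  by move=> a00; move: a0; rewrite a00 ltxx.
rewrite /=; have -> : 1 - (1 - a) = a by ring.
rewrite mulrC mulrA mulVf ?gt_eqF // mul1r.
rewrite lerBlDr lerDl; apply: exprn_ge0; rewrite subr_ge0 ltW //.
Qed.

Lemma uu_rec k n : series (uu k) n.+1 =
   a * v k + (1 - a) * \sum_(l in M) A l k * series (uu l) n.
Proof.
rewrite !seriesEnat /= big_nat_recl //; congr (_ + _).
  by rewrite /uu expr0 mulr1.
rewrite mulr_sumr.
under [RHS]eq_bigr do rewrite seriesEnat /= mulr_sumr mulr_sumr.
rewrite exchange_big /=; apply: eq_bigr => t _.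
rewrite /uu /= /vmul mulr_sumr; apply: eq_bigr => l lM; rewrite exprS; ring.
Qed.

Lemma abel_rec k : k \in M -> abel_sum M v A k a =
   a * v k + (1 - a) * \sum_(l in M) A l k * abel_sum M v A l a.
Proof.
move=> kM; rewrite /abel_sum.
have H1 : series (uu k) n.+1 @[n --> \oo] --> limn (series (uu k)).
  by rewrite cvg_shiftS; exact: uu_cvg.
have H2 : series (uu k) n.+1 @[n --> \oo] -->
   a * v k + (1 - a) * \sum_(l in M) A l k * limn (series (uu l)).
  have -> : (fun n => series (uu k) n.+1) = fun n =>
     a * v k + (1 - a) * \sum_(l in M) A l k * series (uu l) n.
    by apply/funext => n; exact: uu_rec.
  apply: cvgD; first exact: cvg_cst.
  apply: cvgMl_tmp; apply: cvg_bigsum => l lM.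
  apply: cvgMl_tmp; exact: uu_cvg.
exact: (cvg_unique _ H1 H2).
Qed.

End Fixa.

Lemma abel_stationary (pi : X -> R) :
  (forall k, k \in M -> abel_sum M v A k @ at_right 0 --> pi k) ->
  forall k, k \in M -> pi k = \sum_(l in M) A l k * pi l.
Proof.
move=> Hpi k kM.
have hx : (x : R) @[x --> at_right (0:R)] --> (0:R).
  apply: (@cvg_at_right_filter R R id); exact: cvg_id.
have H3 : (x * v k + (1 - x) * \sum_(l in M) A l k * abel_sum M v A l x)
   @[x --> at_right 0] --> 0 * v k + (1 - 0) * \sum_(l in M) A l k * pi l.
  apply: cvgD; first by apply: cvgMr_tmp; exact: hx.
  apply: cvgM; first by apply: cvgB; [exact: cvg_cst | exact: hx].
  apply: cvg_bigsum => l lM; apply: cvgMl_tmp; exact: Hpi.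
have H2 : abel_sum M v A k x @[x --> at_right 0] -->
   0 * v k + (1 - 0) * \sum_(l in M) A l k * pi l.
  apply: cvg_trans H3; apply: near_eq_cvg; near=> x.
  apply/esym/abel_rec => //.
have := cvg_unique (@Rhausdorff R) (Hpi k kM) H2.
by move=> ->; rewrite mul0r add0r subr0 mul1r.
Unshelve. all: by end_near. Qed.

End Ana.

Section Comb.
Variables (R : realType) (X : finType).

Lemma mem_zip2 (s t : seq X) (kl : X * X) :
  kl \in zip s t -> kl.1 \in s /\ kl.2 \in t.
Proof.
elim: s t => [|x s IH] [|y t] //=.
rewrite in_cons => /orP[/eqP -> | /IH [H1 H2]] /=.
  by rewrite !in_cons !eqxx.
by rewrite !in_cons H1 H2 !orbT.
Qed.

Lemma zip_path (e : rel X) x p y kl : path e x p ->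
  kl \in zip (x :: p) (rcons p y) -> e kl.1 kl.2 \/ kl = (last x p, y).
Proof.
elim: p x => [|z p IH] x /=.
  by move=> _; rewrite in_cons in_nil orbF => /eqP ->; right.
move=> /andP[exz pz]; rewrite in_cons => /orP[/eqP -> | H]; first by left.
exact: IH pz H.
Qed.

Lemma zip_last x (p : seq X) y : (last x p, y) \in zip (x :: p) (rcons p y).
Proof.
elim: p x => [|z p IH] x /=; first by rewrite in_cons eqxx.
by rewrite in_cons IH orbT.
Qed.

Lemma path_in (M : {set X}) (e : rel X) x p :
  (forall k l, e k l -> l \in M) -> path e x p -> {subset p <= M}.
Proof.
move=> He; elim: p x => [|z p IH] x //= /andP[exz pz] w.
rewrite in_cons => /orP[/eqP -> | wp]; first exact: He exz.
exact: IH pz w wp.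
Qed.

Lemma circ_cycle (M : {set X}) (g : X -> X -> R) (i j : X) :
  i \in M -> j \in M ->
  (forall k l, g k l = - g l k) ->
  (forall k, k \in M -> \sum_(l in M) g k l = 0) ->
  0 < g i j ->
  exists s : seq X, [/\ uniq s, {subset s <= M}, (i, j) \in cycle_pairs s &
     forall kl, kl \in cycle_pairs s -> 0 < g kl.1 kl.2].
Proof.
move=> iM jM gA gS gij.
pose e := [rel k l | (l \in M) && (0 < g k l)].
have eM : forall k l, e k l -> l \in M by move=> k l /andP[].
pose S := [set l | connect e j l].
have SM : S \subset M.
  apply/fintype.subsetP => l; rewrite inE => /connectP [p pp ->].
  case: (lastP p) pp => [|q z] //= pp.
  rewrite last_rcons; have := @path_in M e j (rcons q z) eM pp; apply; by rewrite mem_rcons in_cons eqxx.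
have jS : j \in S by rewrite inE connect0.
have iS : i \in S.
  apply/negPn/negP => iNS.
  have H0 : \sum_(k in S) \sum_(l in M) g k l = 0.
    by apply: big1 => k kS; apply: gS; exact: (fintype.subsetP SM).
  have Hsplit : forall k, \sum_(l in M) g k l =
      \sum_(l in S) g k l + \sum_(l in M | l \notin S) g k l.
    move=> k; rewrite (bigID (fun l => l \in S)) /=; congr (_ + _).
    apply: eq_bigl => l; rewrite andbC; case lS: (l \in S) => //=.
    exact: (fintype.subsetP SM).
  have HT : \sum_(k in S) \sum_(l in S) g k l = 0.
    set T := \sum_(k in S) \sum_(l in S) g k l.
    have : T = - T.
      rewrite /T [LHS]exchange_big /= -sumrN; apply: eq_bigr => l _.
      rewrite -sumrN; apply: eq_bigr => k _; exact: gA.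
    move=> /eqP; rewrite -subr_eq0 opprK -mulr2n mulrn_eq0 /= => /eqP //.
  have Hneg : forall k, k \in S -> \sum_(l in M | l \notin S) g k l <= 0.
    move=> k kS; rewrite -oppr_ge0 -sumrN; apply: sumr_ge0 => l /andP[lM lNS].
    rewrite oppr_ge0 leNgt; apply/negP => gkl.
    move: lNS; rewrite inE => /negP; apply.
    move: kS; rewrite inE => jk; apply: connect_trans jk _.
    by apply: connect1; rewrite /= lM gkl.
  have Hj : \sum_(l in M | l \notin S) g j l < 0.
    rewrite (bigD1 i) /=; last by rewrite iM iNS.
    have h1 : g j i < 0 by rewrite gA oppr_lt0.
    have h2 : \sum_(l | (l \in M) && (l \notin S) && (l != i)) g j l <= 0.
      rewrite -oppr_ge0 -sumrN; apply: sumr_ge0 => l /andP[/andP[lM lNS] _].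
      rewrite oppr_ge0 leNgt; apply/negP => gkl.
      move: lNS; rewrite inE => /negP; apply.
      by apply: connect1; rewrite /= lM gkl.
    lra.
  have : \sum_(k in S) \sum_(l in M | l \notin S) g k l < 0.
    rewrite (bigD1 j) //=.
    have h2 : \sum_(k in S | k != j) \sum_(l in M | l \notin S) g k l <= 0.
      rewrite -oppr_ge0 -sumrN; apply: sumr_ge0 => k /andP[kS _].
      rewrite oppr_ge0; exact: Hneg.
    lra.
  have : \sum_(k in S) \sum_(l in M) g k l = \sum_(k in S) \sum_(l in M | l \notin S) g k l.
    by under eq_bigr do rewrite Hsplit; rewrite big_split /= HT add0r.
  by rewrite H0 => <-; rewrite ltxx.
move: iS; rewrite inE => /connectP [p pp ip].
case: (shortenP pp) ip => p' pp' up' _ ip.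
exists (j :: p'); rewrite /cycle_pairs rot1_cons; split => //.
- move=> w; rewrite in_cons => /orP[/eqP -> // | wp]; by have := @path_in M e j p' eM pp'; apply.
- rewrite ip; exact: zip_last.
- move=> kl /(@zip_path e j p' j kl pp') [/andP[_ ->] // | ->]; by rewrite -ip.
Qed.
End Comb.

Lemma arith (R : realFieldType) (a b x y pk pl rk rl : R) :
  0 <= a -> 0 <= b -> 0 <= x -> 0 <= y -> 0 <= pk -> 0 <= pl -> 0 <= rk -> 0 <= rl ->
  rk + rl = 1 -> rl = a * rk + (1 - b) * rl -> (a = 0 -> 0 < b) -> a * y = b * x ->
  (0 < pk * x - pl * y -> 0 < pk * rl - rk * pl) /\
  (0 < x -> pk * x - pl * y = 0 -> pk * rl - rk * pl = 0).
Proof.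
move=> a0 b0 x0 y0 pk0 pl0 rk0 rl0 s1 st A2 A3.
have ark : a * rk = b * rl by lra.
have id1 : a * (pk * x - pl * y) = x * (pk * a - pl * b).
  have -> : a * (pk * x - pl * y) = pk * x * a - pl * (a * y) by ring.
  rewrite A3; ring.
have id2 : a * (pk * rl - rk * pl) = rl * (pk * a - pl * b).
  have -> : a * (pk * rl - rk * pl) = pk * rl * a - (a * rk) * pl by ring.
  rewrite ark; ring.
have [az|ap] : a = 0 \/ 0 < a.
  by case: (ltgtP a 0) => h; [lra | right | left].
- have bp := A2 az.
  have xz : x = 0.
    by move: A3; rewrite az mul0r => /esym /eqP; rewrite mulf_eq0 gt_eqF //= => /eqP.
  split; first by rewrite xz mulr0 sub0r oppr_gt0 ltNge mulr_ge0.
  by rewrite xz ltxx.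
- have rlp : 0 < rl.
    case: (ltgtP rl 0) => h //; first lra.
    have rk1 : rk = 1 by lra.
    move: ark; rewrite h rk1 mulr0 mulr1 => az; lra.
  split.
  + move=> fp.
    have : 0 < x * (pk * a - pl * b) by rewrite -id1 mulr_gt0.
    move=> h.
    have Dp : 0 < pk * a - pl * b.
      rewrite ltNge; apply/negP => hD.
      have : x * (pk * a - pl * b) <= 0 by rewrite mulr_ge0_le0.
      by rewrite leNgt h.
    have : 0 < a * (pk * rl - rk * pl) by rewrite id2 mulr_gt0.
    by rewrite pmulr_rgt0.
  + move=> xp fz.
    have : x * (pk * a - pl * b) = 0 by rewrite -id1 fz mulr0.
    move/eqP; rewrite mulf_eq0 gt_eqF //= => /eqP Dz.
    have : a * (pk * rl - rk * pl) = 0 by rewrite id2 Dz mulr0.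
    by move/eqP; rewrite mulf_eq0 gt_eqF //= => /eqP.
Qed.

Section Main.
Variables (R : realType) (X : finType) (p : X -> {set X} -> R)
  (Q : {set X} -> X -> X -> R) (nu : {set X} -> X -> R).
Hypothesis hp : stoch_choice p.
Hypothesis hQ : MSC Q nu.
Hypothesis hr : rationalizes p Q nu.

Lemma rowsum N : N != finset.set0 -> forall k, k \in N -> \sum_(l in N) Q N k l = 1.
Proof.
move=> N0 k kN; have [_ [_ [_ [Qd _]]]] := hQ N N0.
rewrite (bigD1 k) //= (Qd k kN).1 subrK //.
Qed.

Lemma stat N : N != finset.set0 -> forall l, l \in N ->
  p l N = \sum_(k in N) Q N k l * p k N.
Proof.
move=> N0 l lN; have [Q0 [nu0 [nu1 _]]] := hQ N N0.
exact: (@abel_stationary R X N (nu N) (Q N) Q0 (rowsum N N0) nu0 nu1 (fun m => p m N) (hr N N0) l lN).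
Qed.

Lemma sum2 (F : X -> R) k l : k != l -> \sum_(m in k |: [set l]) F m = F k + F l.
Proof. by move=> kl; rewrite big_setU1 ?big_set1 // inE. Qed.

Lemma local M k l : M != finset.set0 -> k \in M -> l \in M -> k != l ->
  (0 < p k M * Q M k l - p l M * Q M l k -> 0 < delta p M k l) /\
  (0 < Q M k l -> p k M * Q M k l - p l M * Q M l k = 0 -> delta p M k l = 0).
Proof.
move=> M0 kM lM kl.
set P := k |: [set l].
have P0 : P != finset.set0 by apply/set0Pn; exists k; rewrite !inE eqxx.
have kP : k \in P by rewrite !inE eqxx.
have lP : l \in P by rewrite !inE eqxx orbT.
have [Q0 [_ [_ [_ H5]]]] := hQ M M0.
have [A2 A3] := H5 k l kM lM kl.
have [Q0' _] := hQ P P0.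
have rs := rowsum P P0 l lP; rewrite sum2 // in rs.
have st := stat P P0 l lP; rewrite sum2 // in st.
have [_ [s1 _]] := hp P P0; rewrite sum2 // in s1.
have pge0 : forall m N, N != finset.set0 -> 0 <= p m N.
  by move=> m N N0; have [H _] := hp N N0; case/andP: (H m).
have Qll : Q P l l = 1 - Q P l k by rewrite -rs addrC addKr.
rewrite Qll in st.
rewrite /delta -/P.
apply: (@arith R (Q P k l) (Q P l k)) => //; try exact: pge0.
- by apply: Q0'.
- by apply: Q0'.
- by apply: Q0.
- by apply: Q0.
Qed.

End Main.

Lemma delta_anti (R : realType) (X : finType) (p : X -> {set X} -> R) M k l :
  delta p M k l = - delta p M l k.
Proof.
rewrite /delta [in RHS]finset.setUC.
rewrite /delta; ring.
Qed.

Lemma cyc_in (X : finType) (M : {set X}) (s : seq X) kl :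
  {subset s <= M} -> kl \in cycle_pairs s -> kl.1 \in M /\ kl.2 \in M.
Proof.
move=> sM /mem_zip2 [h1 h2]; split; apply: sM => //.
by rewrite -(mem_rot 1).
Qed.

Theorem proposition3 (R : realType) (X : finType) (p : X -> {set X} -> R)
  (M : {set X}) (i j : X) :
  stoch_choice p -> M != finset.set0 -> i \in M -> j \in M -> i != j ->
  ~ bounded_in_cycle p M i j ->
  forall (Q : {set X} -> X -> X -> R) (nu : {set X} -> X -> R),
    MSC Q nu -> rationalizes p Q nu -> Q M i j = 0.
Proof.
move=> hp M0 iM jM ij hnb Q nu hQ hr.
have [Q0 _] := hQ M M0.
pose f := fun k l => p k M * Q M k l - p l M * Q M l k.
have fA : forall k l, f k l = - f l k by move=> k l; rewrite /f; ring.
have fS : forall k, k \in M -> \sum_(l in M) f k l = 0.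
  move=> k kM; rewrite /f sumrB -mulr_sumr (@rowsum _ _ Q nu hQ M M0 k kM) mulr1.
  under eq_bigr do rewrite mulrC.
  by rewrite -(@stat _ _ p Q nu hQ hr M M0 k kM) subrr.
have dne : delta p M i j != 0 by apply/eqP => h; apply: hnb; left.
apply/eqP; rewrite eq_le Q0 // andbT leNgt; apply/negP => xp.
have [Lp Lz] := @local _ _ p Q nu hp hQ hr M i j M0 iM jM ij.
have fneq : forall k l, k \in M -> l \in M -> f k l != 0 -> k != l.
  by move=> k l _ _; apply: contra => /eqP ->; rewrite /f subrr.
case: (ltgtP (f i j) 0) => hf.
- apply: hnb; right.
  have gA : forall k l, - f k l = - - f l k by move=> k l; rewrite fA.
  have gS : forall k, k \in M -> \sum_(l in M) - f k l = 0.
    by move=> k kM; rewrite sumrN fS // oppr0.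
  have [s [us sM ijs hs]] := @circ_cycle R X M (fun k l => - f k l) i j iM jM gA gS (ltac:(by rewrite oppr_gt0)).
  exists s; split => //; right => kl klin.
  have [k1 k2] := @cyc_in X M s kl sM klin.
  have hkl := hs kl klin; rewrite /= oppr_gt0 in hkl.
  have kl12 : kl.1 != kl.2 by apply: fneq => //; rewrite lt_eqF.
  have [L _] := @local _ _ p Q nu hp hQ hr M kl.2 kl.1 M0 k2 k1 (ltac:(by rewrite eq_sym)).
  rewrite delta_anti oppr_lt0; apply: L.
  by rewrite -/(f kl.2 kl.1) fA oppr_gt0.
- apply: hnb; right.
  have [s [us sM ijs hs]] := @circ_cycle R X M f i j iM jM fA fS hf.
  exists s; split => //; left => kl klin.
  have [k1 k2] := @cyc_in X M s kl sM klin.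
  have hkl := hs kl klin.
  have kl12 : kl.1 != kl.2 by apply: fneq => //; rewrite gt_eqF.
  have [L _] := @local _ _ p Q nu hp hQ hr M kl.1 kl.2 M0 k1 k2 kl12.
  exact: L.
- by move: dne; rewrite (Lz xp hf) eqxx.
Qed.
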